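(* Let $x\in\mathbb X$ and $B\Subset\mathbb X$. Then \[ \prod_{Y\in\mathbf F(x)}\max\Big\{|W(Y\mid B)|,\ 1+|W(Y\mid B)-1|\alpha^S\ \Big|\ \varnothing\neq S\subset Y\setminus\{x\}\Big\} \le\mathbf 1_{\{x\notin B\}}\prod_{X\in\mathbf F(x)}\max\Big\{|W(X)|,\ 1+|W(X)-1|\alpha^S\ \Big|\ \varnothing\neq S\subset X\setminus\{x\}\Big\}. \]
   Context: $\mathbb X$ is a finite or countably infinite set; $X\Subset\mathbb X$ means finite subset; $\mathbf F$ is the set of finite subsets of $\mathbb X$ and $\mathbf F(x)=\{X\Subset\mathbb X\mid x\in X\}$. Fix $W:\mathbf F\to\mathbb C$, $r:\mathbb X\to[0,1)$, $\alpha=\frac r{1-r}$, and write $\alpha^S=\prod_{s\in S}\alpha(s)$. The conditional interaction is $W(X\mid B)=\prod_{C\subset B}W(X\cup C)$ if $X\cap B=\varnothing$, $W(X\mid B)=0$ if $X=\{y\}$ with $y\in B$, and $W(X\mid B)=1$ otherwise. A maximum $\max\{a,\ b_S\mid S\in\mathcal S\}$ denotes the maximum of $a$ together with all $b_S$, $S\in\mathcal S$ (it equals $a$ if $\mathcal S=\varnothing$). Products of nonnegative numbers over infinite index sets are understood in $[0,\infty]$. *)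

(* Defs.v *)
From HB Require Import structures.
From mathcomp Require Import all_boot all_order all_algebra.
From mathcomp Require Import finmap.
From mathcomp Require Import all_classical all_reals ereal.
From mathcomp Require Import complex.
Set Implicit Arguments. Unset Strict Implicit. Unset Printing Implicit Defensive.
Import Order.TTheory GRing.Theory Num.Theory.
Local Open Scope fset_scope.
Local Open Scope ring_scope.

Definition cabs (R : realType) (z : R[i]) : R := complex.Re `|z|.

Definition alpha (T : choiceType) (R : realType) (r : T -> R) (s : T) : R :=
  r s / (1 - r s).
Definition alphaS (T : choiceType) (R : realType) (r : T -> R) (S : {fset T}) : R :=
  \prod_(s <- S) alpha r s.

Definition condW (T : choiceType) (R : realType) (W : {fset T} -> R[i])
    (X B : {fset T}) : R[i] :=
  if X `&` B == fset0 then \prod_(C <- fpowerset B) W (X `|` C)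
  else if has (fun y => X == [fset y]) B then 0 else 1.

Definition maxfac (T : choiceType) (R : realType) (r : T -> R) (x : T)
    (Y : {fset T}) (w : R[i]) : R :=
  \big[Num.max/cabs w]_(S <- fpowerset (Y `\ x) | S != fset0)
     (1 + cabs (w - 1) * alphaS r S).

(* product over the set {Y | P Y} of finite subsets of nonnegative extended
   reals, understood in [0, +oo]: the factors < 1 contribute the infimum of
   their finite partial products, the factors >= 1 the supremum of theirs
   (with 0 * +oo = 0). *)
Local Open Scope ereal_scope.
Definition eprod (T : choiceType) (R : realType) (P : pred {fset T})
    (f : {fset T} -> \bar R) : \bar R :=
  ereal_inf [set \prod_(Y <- A | P Y && (f Y < 1)) f Y | A in [set: {fset {fset T}}]]
  * ereal_sup [set \prod_(Y <- A | P Y && (1 <= f Y)) f Y | A in [set: {fset {fset T}}]].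

(* Main.v *)
Require Import Defs.
From HB Require Import structures.
From mathcomp Require Import all_boot all_order all_algebra.
From mathcomp Require Import finmap.
From mathcomp Require Import all_classical all_reals ereal.
From mathcomp Require Import complex.
From mathcomp Require Import ring lra.
Import Order.TTheory GRing.Theory Num.Theory.
Local Open Scope fset_scope.
Local Open Scope ring_scope.

Section Aux.
Variable R : realType.

Lemma cabsE (z : R[i]) : cabs z = Normc.normc z.
Proof. by case: z. Qed.

Lemma cabs_ge0 (z : R[i]) : 0 <= cabs z.
Proof. by rewrite cabsE; case: z => a b /=; rewrite sqrtr_ge0. Qed.

Lemma cabsM (z w : R[i]) : cabs (z * w) = cabs z * cabs w.
Proof. by rewrite !cabsE Normc.normcM. Qed.

Lemma cabs1 : cabs (1 : R[i]) = 1.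
Proof. by rewrite cabsE Normc.normc1. Qed.

Lemma cabs0 : cabs (0 : R[i]) = 0.
Proof. by rewrite cabsE Normc.normc0. Qed.

Lemma cabsD (z w : R[i]) : cabs (z + w) <= cabs z + cabs w.
Proof. by rewrite !cabsE le_normcD. Qed.

Lemma cabs_prod (I : Type) (s : seq I) (P : pred I) (F : I -> R[i]) :
  cabs (\prod_(i <- s | P i) F i) = \prod_(i <- s | P i) cabs (F i).
Proof. exact: (big_morph _ cabsM cabs1). Qed.

Lemma prod_step (I : Type) (s : seq I) (w : I -> R[i]) (m : I -> R) (t : R) :
  0 <= t ->
  (forall i, cabs (w i) <= m i) ->
  (forall i, 1 + cabs (w i - 1) * t <= m i) ->
  1 + cabs (\prod_(i <- s) w i - 1) * t <= \prod_(i <- s) m i.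
Proof.
move=> t0 hc hm; elim: s => [|i s IH]; first by rewrite !big_nil subrr cabs0 mul0r addr0.
rewrite !big_cons.
set W := \prod_(j <- s) w j in IH *; set M := \prod_(j <- s) m j in IH *.
have e : w i * W - 1 = w i * (W - 1) + (w i - 1) by rewrite mulrBr mulr1 addrA subrK.
have h1 := hm i; have h2 := hc i.
have c1 := cabs_ge0 (W - 1); have c2 := cabs_ge0 (w i - 1); have c3 := cabs_ge0 (w i).
have H : cabs (w i * W - 1) <= cabs (w i) * cabs (W - 1) + cabs (w i - 1).
  by rewrite e -cabsM cabsD.
have H2 : cabs (w i * W - 1) * t <= cabs (w i) * (cabs (W - 1) * t) + cabs (w i - 1) * t.
  rewrite mulrA -mulrDl; exact: ler_wpM2r.
have H3 : cabs (w i) * (cabs (W - 1) * t) <= m i * (M - 1).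
  apply: ler_pM => //; first exact: mulr_ge0.
  by rewrite lerBrDl.
have m0 : 0 <= m i by apply: le_trans h2.
nra.
Qed.


Variable T : choiceType.
Variable r : T -> R.
Hypothesis hr : forall s, 0 <= r s < 1.
Variable x : T.
Implicit Types (Y S : {fset T}) (w : R[i]).

Lemma alphaS_ge0 S : 0 <= alphaS r S.
Proof.
apply: prodr_ge0 => s _; rewrite /alpha.
have /andP[h0 h1] := hr s.
by apply: divr_ge0 => //; rewrite subr_ge0 ltW.
Qed.

Lemma maxfac_ge_cabs Y w : cabs w <= maxfac r x Y w.
Proof.
rewrite /maxfac; elim/big_rec: _ => // i y _ Hy.
by rewrite le_max Hy orbT.
Qed.

Lemma maxfac_ge0 Y w : 0 <= maxfac r x Y w.
Proof. exact: le_trans (cabs_ge0 w) (maxfac_ge_cabs Y w). Qed.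

Lemma maxfac_geS Y w S : S `<=` Y `\ x -> S != fset0 ->
  1 + cabs (w - 1) * alphaS r S <= maxfac r x Y w.
Proof.
move=> SY S0; rewrite /maxfac.
apply: (le_bigmax_seq (cabs w) S (fun S => S != fset0) (fun S => 1 + cabs (w - 1) * alphaS r S)) => //.
have h := fpowersetE (Y `\ x) S; rewrite SY in h; exact: h.

Qed.

Lemma maxfac_le Y w M : cabs w <= M ->
  (forall S, S `<=` Y `\ x -> S != fset0 -> 1 + cabs (w - 1) * alphaS r S <= M) ->
  maxfac r x Y w <= M.
Proof.
move=> h1 h2; rewrite /maxfac big_seq_cond; apply: bigmax_le => // S.
case/andP=> hS; apply: h2; have h := fpowersetE (Y `\ x) S; rewrite -h; exact: hS.
Qed.

Lemma maxfac_ge1 Y w : x \in Y -> Y != [fset x] -> 1 <= maxfac r x Y w.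
Proof.
move=> xY Yx.
have hS : Y `\ x != fset0.
  apply: contra Yx => /eqP e; apply/eqP.
  by rewrite -(fsetD1K xY) e fsetU0.
have := maxfac_geS Y w (Y `\ x) (fsubset_refl _) hS; apply: le_trans.
by rewrite lerDl mulr_ge0 ?cabs_ge0 ?alphaS_ge0.
Qed.


Lemma maxfac_prod Y (B : {fset T}) (W : {fset T} -> R[i]) :
  maxfac r x Y (\prod_(C <- fpowerset B) W (Y `|` C)) <=
  \prod_(C <- fpowerset B) maxfac r x (Y `|` C) (W (Y `|` C)).
Proof.
apply: maxfac_le.
  rewrite cabs_prod; apply: ler_prod => C _.
  by rewrite cabs_ge0 maxfac_ge_cabs.
move=> S SY S0; apply: prod_step (alphaS_ge0 S) _ _ => C.
  exact: maxfac_ge_cabs.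
apply: maxfac_geS S0; apply: fsubset_trans SY _.
by apply: fsetSD; apply: fsubsetUl.
Qed.

Lemma fbound Y B W : x \notin B -> x \in Y ->
  maxfac r x Y (condW W Y B) <=
  if Y `&` B == fset0 then
    \prod_(C <- fpowerset B) maxfac r x (Y `|` C) (W (Y `|` C)) else 1.
Proof.
move=> xB xY; rewrite /condW; case: ifP => _; first exact: maxfac_prod.
have -> : has (fun y => Y == [fset y]) B = false.
  apply/hasP => -[y yB /eqP YE]; move: xY; rewrite YE inE => /eqP exy.
  by rewrite exy yB in xB.
apply: maxfac_le => [|S _ _]; first by rewrite cabs1.
by rewrite subrr cabs0 mul0r addr0.
Qed.

Lemma fx0 B W : x \in B -> maxfac r x [fset x] (condW W [fset x] B) = 0.
Proof.
move=> xB; apply/le_anti; rewrite maxfac_ge0 andbT.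
rewrite /condW.
have -> : ([fset x] `&` B == fset0) = false.
  apply/negbTE/fset0Pn; exists x; by rewrite in_fsetI fset11 xB.
have -> : has (fun y => [fset x] == [fset y]) B.
  by apply/hasP; exists x.
apply: maxfac_le => [|S SY S0]; first by rewrite cabs0.
by move: SY; rewrite fsetDv fsubset0 (negbTE S0).
Qed.

End Aux.

Section Prod.
Variable R : realType.
Variable T : choiceType.
Variable x : T.
Implicit Types (Y : {fset T}) (A : {fset {fset T}}).

Lemma prod_split (A : {fset {fset T}}) a (c : pred {fset T}) (F : {fset T} -> R) :
  \prod_(Y <- A | c Y) F Y =
  (if (a \in A) && c a then F a else 1) * \prod_(Y <- A `\ a | c Y) F Y.
Proof.
case: (boolP (a \in A)) => aA /=.
  by rewrite big_mkcond (big_fsetD1 a aA) /= -big_mkcond.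
by rewrite mem_fsetD1 // mul1r.
Qed.

Variable h : {fset T} -> R.
Hypothesis h0 : forall Y, 0 <= h Y.
Hypothesis h1 : forall Y, x \in Y -> Y != [fset x] -> 1 <= h Y.

Definition Qp (A : {fset {fset T}}) := \prod_(Y <- A `\ [fset x] | x \in Y) h Y.

Lemma Qp_ge0 A : 0 <= Qp A.
Proof. by apply: prodr_ge0 => Y _; apply: h0. Qed.

Lemma inf_part A :
  \prod_(Y <- A | (x \in Y) && (h Y < 1)) h Y =
  if ([fset x] \in A) && (h [fset x] < 1) then h [fset x] else 1.
Proof.
rewrite (prod_split _ [fset x]) fset11 /= big1_fset ?mulr1 //.
move=> Y; rewrite in_fsetD1 => /andP[YX _] /andP[xY].
by rewrite ltNge h1.
Qed.

Lemma sup_part A :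
  \prod_(Y <- A | (x \in Y) && (1 <= h Y)) h Y =
  (if ([fset x] \in A) && (1 <= h [fset x]) then h [fset x] else 1) * Qp A.
Proof.
rewrite (prod_split _ [fset x]) fset11 /=; congr (_ * _).
rewrite /Qp big_seq_cond [RHS]big_seq_cond; apply: eq_bigl => Y.
case: (boolP (Y \in A `\ [fset x])) => //= /[dup] YA.
rewrite in_fsetD1 => /andP[YX _]; case: (boolP (x \in Y)) => //= xY.
by rewrite h1.
Qed.

Lemma pi_part A :
  \prod_(Y <- A | x \in Y) h Y = (if [fset x] \in A then h [fset x] else 1) * Qp A.
Proof. by rewrite (prod_split _ [fset x]) fset11 andbT. Qed.


Lemma splitU Y C (B : {fset T}) : Y `&` B = fset0 -> C `<=` B ->
  ((Y `|` C) `\` B = Y) /\ ((Y `|` C) `&` B = C).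
Proof.
move=> /fsetP hYB /fsubsetP hCB; split; apply/fsetP => z; rewrite !inE;
  have := hYB z; have := hCB z; rewrite !inE;
  case: (z \in Y); case: (z \in B); case: (z \in C) => //=.
all: try by move=> /(_ isT).
Qed.

Lemma regroup (A1 : {fset {fset T}}) (B : {fset T}) (G : {fset T} -> R) :
  (forall Y, Y \in A1 -> Y `&` B = fset0) ->
  \prod_(Y <- A1) \prod_(C <- fpowerset B) G (Y `|` C) =
  \prod_(X <- [fset Y `|` C | Y in A1, C in fpowerset B]) G X.
Proof.
move=> hB; rewrite big_imfset2 //=.
move=> [Y C] [Y' C'] /=; rewrite !inE /= => /andP[YA CB] /andP[YA' CB'] e.
rewrite fpowersetE in CB; rewrite fpowersetE in CB'.
have [e1 e2] := splitU _ _ _ (hB _ YA) CB.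
have [e1' e2'] := splitU _ _ _ (hB _ YA') CB'.
have eY : Y = Y' by rewrite -e1 -e1' e.
subst Y'; have eC : C = C' by rewrite -e2 -e2' e.
by subst C'.
Qed.
End Prod.

Section Main.
Variables (T : choiceType) (R : realType) (x : T).
Implicit Types (Y : {fset T}) (A : {fset {fset T}}).

Definition Inf (h : {fset T} -> R) :=
  ereal_inf [set (\prod_(Y <- A | (x \in Y) && (h Y < 1)) h Y)%:E | A in [set: {fset {fset T}}]].
Definition Sup (h : {fset T} -> R) :=
  ereal_sup [set (\prod_(Y <- A | (x \in Y) && (1 <= h Y)) h Y)%:E | A in [set: {fset {fset T}}]].

Lemma eprodE (h : {fset T} -> R) :
  eprod (fun Y : {fset T} => x \in Y) (fun Y => (h Y)%:E) = (Inf h * Sup h)%E.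
Proof.
rewrite /eprod; congr (ereal_inf _ * ereal_sup _)%E; congr image;
  apply: funext => A; rewrite -prodEFin; apply: eq_bigl => Y.
  by rewrite lte_fin.
by rewrite lee_fin.

Qed.

Local Notation X0 := [fset x].

Lemma main_gen (B : {fset T}) (f g : {fset T} -> R)
  (f0 : forall Y, 0 <= f Y) (g0 : forall Y, 0 <= g Y)
  (f1 : forall Y, x \in Y -> Y != [fset x] -> 1 <= f Y)
  (g1 : forall Y, x \in Y -> Y != [fset x] -> 1 <= g Y)
  (fb : x \notin B -> forall Y, x \in Y -> f Y <=
      if Y `&` B == fset0 then \prod_(C <- fpowerset B) g (Y `|` C) else 1)
  (fx : x \in B -> f [fset x] = 0) :
  (Inf f * Sup f <= ((x \notin B)%:R)%:E * (Inf g * Sup g))%E.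
Proof.
have Igm : forall h, (forall Y, 0 <= h Y) ->
    (forall Y, x \in Y -> Y != X0 -> 1 <= h Y) ->
    ((if h X0 < 1 then h X0 else 1)%:E <= Inf h)%E.
  move=> h h0 h1; apply: le_ereal_inf_tmp => _ [A _ <-].
  rewrite lee_fin inf_part //.
  case: (boolP (h X0 < 1)) => hl; case: (X0 \in A) => //=; rewrite ?hl ?lexx //.
  exact: ltW.
have Ifm : forall h, (forall Y, 0 <= h Y) ->
    (forall Y, x \in Y -> Y != X0 -> 1 <= h Y) ->
    (Inf h <= (if h X0 < 1 then h X0 else 1)%:E)%E.
  move=> h h0 h1; apply: ereal_inf_lbound; exists [fset X0] => //.
  by rewrite inf_part // fset11.
have S0 : forall h, (0 <= Sup h)%E.
  move=> h; apply: (@le_trans _ _ 1%E) => //.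
  apply: ereal_sup_ubound.
  by exists fset0 => //; rewrite big_mkcond big_seq_fset0.
case: (boolP (x \in B)) => xB /=.
  rewrite mul0e.
  have I0 : Inf f = 0%E.
    apply/le_anti/andP; split.
      by apply: le_trans (Ifm f f0 f1) _; rewrite fx // ltr01.
    apply: le_ereal_inf_tmp => _ [A _ <-].
    by rewrite lee_fin prodr_ge0.
  by rewrite I0 mul0e.
rewrite mul1e.
set mf := if f X0 < 1 then f X0 else 1.
set mg := if g X0 < 1 then g X0 else 1.
have mf0 : 0 <= mf by rewrite /mf; case: ifP.
have mg0 : 0 <= mg by rewrite /mg; case: ifP.
have key : forall A,
    ((mf * \prod_(Y <- A | (x \in Y) && (1 <= f Y)) f Y)%:E <= Inf g * Sup g)%E.
  move=> A.
  set A1 := X0 |` A.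
  set A1' := [fset Y in A1 | (x \in Y) && (Y `&` B == fset0)].
  set A' := [fset Y `|` C | Y in A1', C in fpowerset B].
  have X0A' : X0 \in A'.
    apply/imfset2P; exists X0.
      rewrite !inE /= !eqxx /=; apply/eqP/fsetP => z; rewrite !inE.
      by case: eqP => // ->; rewrite (negbTE xB).
    exists fset0; last by rewrite fsetU0.
    by rewrite fpowersetE fsub0set.
  have step1 : mf * \prod_(Y <- A | (x \in Y) && (1 <= f Y)) f Y <= f X0 * Qp _ _ x f A.
    rewrite sup_part // mulrA; apply: ler_wpM2r; first exact: Qp_ge0.
    rewrite /mf; case: (boolP (f X0 < 1)) => hl; case: (X0 \in A) => /=.
    - by rewrite [1 <= _]leNgt hl mulr1.
    - by rewrite mulr1.
    - by rewrite ltNge negbK in hl; rewrite hl mul1r.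
    - by rewrite ltNge negbK in hl; rewrite mul1r.
  have step2 : f X0 * Qp _ _ x f A = \prod_(Y <- A1 | x \in Y) f Y.
    rewrite pi_part // fset1U1; congr (_ * _); rewrite /Qp.
    have -> : A1 `\ X0 = A `\ X0.
      by apply/fsetP => Z; rewrite !inE; case: eqP.
    by [].
  have step3 : \prod_(Y <- A1 | x \in Y) f Y <= \prod_(Y <- A1 | x \in Y)
      (if Y `&` B == fset0 then \prod_(C <- fpowerset B) g (Y `|` C) else 1).
    by apply: ler_prod => Y xY; rewrite f0 fb.
  have step4 : \prod_(Y <- A1 | x \in Y)
      (if Y `&` B == fset0 then \prod_(C <- fpowerset B) g (Y `|` C) else 1)
      = \prod_(X <- A') g X.
    rewrite -big_mkcondr big_fset_condE regroup //.
    by move=> Y; rewrite !inE => /andP[_ /andP[_ /eqP]].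
  have step5 : \prod_(X <- A') g X = \prod_(X <- A' | x \in X) g X.
    rewrite big_seq [RHS]big_seq_cond; apply: eq_bigl => X.
    case: (boolP (X \in A')) => //= /imfset2P [Y].
    rewrite !inE => /andP[_ /andP[xY _]] [C _ ->].
    by rewrite inE xY.
  have step6 : \prod_(X <- A' | x \in X) g X =
      mg * \prod_(X <- A' | (x \in X) && (1 <= g X)) g X.
    rewrite pi_part // sup_part // X0A' /= mulrA; congr (_ * _).
    rewrite /mg; case: (boolP (g X0 < 1)) => hl.
      by rewrite [1 <= _]leNgt hl mulr1.
    by rewrite ltNge negbK in hl; rewrite hl mul1r.
  apply: (@le_trans _ _ (mg * \prod_(X <- A' | (x \in X) && (1 <= g X)) g X)%:E).
    rewrite lee_fin -step6 -step5 -step4; apply: le_trans step3.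
    by rewrite -step2.
  rewrite EFinM; apply: lee_pmul.
  - by rewrite lee_fin.
  - by rewrite lee_fin prodr_ge0.
  - exact: Igm.
  - by apply: ereal_sup_ubound; exists A'.
apply: (le_trans (lee_wpmul2r (S0 f) (Ifm f f0 f1))).
rewrite -/mf.
case: (eqVneq mf 0) => [->|mfn0].
  rewrite mul0e; apply: mule_ge0; last exact: S0.
  by apply: le_trans (Igm g g0 g1); rewrite lee_fin.
have mfp : 0 < mf by rewrite lt_def mfn0.
have mm : (mf%:E * (mf^-1)%:E = 1)%E by rewrite -EFinM mulfV.
have hS : (Sup f <= (mf^-1)%:E * (Inf g * Sup g))%E.
  apply: ge_ereal_sup => _ [A _ <-].
  rewrite -(@lee_pmul2l _ (mf%:E)) // ?lte_fin // muleA mm mul1e.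
  by rewrite -EFinM; exact: key.
by move: hS; rewrite -(@lee_pmul2l _ (mf%:E)) // ?lte_fin // muleA mm mul1e.

Qed.

End Main.

Theorem corollary4p7 (T : countType) (R : realType) (W : {fset T} -> R[i])
    (r : T -> R) (hr : forall s, 0 <= r s < 1) (x : T) (B : {fset T}) :
  (eprod (fun Y : {fset T} => x \in Y)
      (fun Y => (maxfac r x Y (condW W Y B))%:E)
   <= ((x \notin B)%:R)%:E *
      eprod (fun X : {fset T} => x \in X) (fun X => (maxfac r x X (W X))%:E))%E.
Proof.
rewrite (@eprodE _ _ x (fun Y => maxfac r x Y (condW W Y B))).
rewrite (@eprodE _ _ x (fun Y => maxfac r x Y (W Y))).
apply: main_gen.
- by move=> Y; apply: maxfac_ge0.
- by move=> Y; apply: maxfac_ge0.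
- by move=> Y; apply: (maxfac_ge1 _ _ _ hr).
- by move=> Y; apply: (maxfac_ge1 _ _ _ hr).
- by move=> xB Y xY; apply: (fbound _ _ _ hr).
- by move=> xB; apply: fx0.
Qed.
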